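(* Let $p/q$ be an even rational parameter and let $\rho(x,y)=(x,-y)$. Then the set of light points is invariant under $\rho$. More precisely: a point $z$ is a light point of type $\mathcal P$ (resp. $\mathcal Q$) on a horizontal unit segment if and only if $\rho(z)$ is a light point of type $\mathcal P$ (resp. $\mathcal Q$) on a horizontal unit segment; and $z$ is a light point of type $\mathcal P$ on a vertical unit segment if and only if $\rho(z)$ is a light point of type $\mathcal Q$ on a vertical unit segment.
   Context: An even rational parameter is a rational $p/q\in(0,1)$, $p,q$ positive coprime integers, with $pq$ even. Put $\omega=p+q$, $P=2p/\omega$, $Q=2q/\omega$. Families of lines: $\mathcal H$ = lines $y=n$, $\mathcal V$ = lines $x=n$ ($n\in\mathbb Z$), $\mathcal P$ = lines of slope $-P$ with integer $y$-intercept, $\mathcal Q$ = lines of slope $-Q$ with integer $y$-intercept. Functions mod $2\mathbb Z$, with values represented in $(-1,1]$: $F_H(x,y)=2Py$, $F_V(x,y)=2Px$, $F_P(x,y)=Py+P^2x+1$, $F_Q(x,y)=Py+PQx+1$. A unit segment is an edge of a unit square of the integer grid; horizontal ones lie on lines of $\mathcal H$ (set $A=H$), vertical ones on lines of $\mathcal V$ (set $A=V$). For $B\in\{P,Q\}$, a point $z$ of a unit segment is a light point of type $\mathcal B$ on that segment if $z$ lies on a line of the family $\mathcal B$ and $F_A(z)F_B(z)>0$ and $|F_B(z)|<|F_A(z)|$. *)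

(* Defs.v *)
From HB Require Import structures.
From mathcomp Require Import all_boot all_order all_algebra.
From mathcomp Require Import reals.
Set Implicit Arguments. Unset Strict Implicit. Unset Printing Implicit Defensive.
Import Order.TTheory GRing.Theory Num.Theory.
Local Open Scope ring_scope.

Section Defs.
Variable R : realType.

Definition even_rational_param (p q : nat) : Prop :=
  [/\ (0 < p)%N, (p < q)%N, coprime p q & ~~ odd (p * q)].

Definition omega (p q : nat) : R := (p + q)%:R.
Definition bigP (p q : nat) : R := (2 * p)%:R / omega p q.
Definition bigQ (p q : nat) : R := (2 * q)%:R / omega p q.

(* representative of t mod 2Z in (-1,1] *)
Definition red2 (t : R) : R := t - 2 * (Num.ceil ((t - 1) / 2))%:~R.

Definition F_H p q (z : R * R) : R := red2 (2 * bigP p q * z.2).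
Definition F_V p q (z : R * R) : R := red2 (2 * bigP p q * z.1).
Definition F_P p q (z : R * R) : R :=
  red2 (bigP p q * z.2 + bigP p q ^+ 2 * z.1 + 1).
Definition F_Q p q (z : R * R) : R :=
  red2 (bigP p q * z.2 + bigP p q * bigQ p q * z.1 + 1).

(* z lies on a horizontal (resp. vertical) unit segment, i.e. on a line of H (resp. V) *)
Definition on_horiz (z : R * R) : Prop := exists n : int, z.2 = n%:~R.
Definition on_vert (z : R * R) : Prop := exists n : int, z.1 = n%:~R.
Definition on_slope_line (s : R) (z : R * R) : Prop :=
  exists n : int, z.2 = - s * z.1 + n%:~R.

Definition light_cond (FA FB : R) : Prop := 0 < FA * FB /\ `|FB| < `|FA|.

Definition light_H_P p q (z : R * R) : Prop :=
  [/\ on_horiz z, on_slope_line (bigP p q) z & light_cond (F_H p q z) (F_P p q z)].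
Definition light_H_Q p q (z : R * R) : Prop :=
  [/\ on_horiz z, on_slope_line (bigQ p q) z & light_cond (F_H p q z) (F_Q p q z)].
Definition light_V_P p q (z : R * R) : Prop :=
  [/\ on_vert z, on_slope_line (bigP p q) z & light_cond (F_V p q z) (F_P p q z)].
Definition light_V_Q p q (z : R * R) : Prop :=
  [/\ on_vert z, on_slope_line (bigQ p q) z & light_cond (F_V p q z) (F_Q p q z)].

Definition rho (z : R * R) : R * R := (z.1, - z.2).
End Defs.

(* Main.v *)
Require Import Defs.
From mathcomp Require Import all_boot all_order all_algebra reals.
From mathcomp Require Import ring lra zify.
Import Order.TTheory GRing.Theory Num.Theory.
Local Open Scope ring_scope.
Set Implicit Arguments.

Section S.
Variable R : realType.

Lemma red2_range (t : R) : -1 < red2 t /\ red2 t <= 1.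
Proof.
rewrite /red2; have /andP[h1 h2] := ceil_itv ((t - 1) / 2).
move: h1 h2; rewrite intrB /=; set c := (Num.ceil _)%:~R => h1 h2; lra.
Qed.

Lemma red2_char (t s : R) (k : int) :
  -1 < s -> s <= 1 -> s = t + 2 * k%:~R -> red2 t = s.
Proof.
move=> h1 h2 hs; rewrite /red2.
have -> : Num.ceil ((t - 1) / 2) = - k.
  apply: ceil_def; rewrite intrB /= intrN; apply/andP; split; lra.
rewrite intrN; lra.
Qed.

Lemma red2_shift (t : R) : exists k : int, red2 t = t + 2 * k%:~R.
Proof. exists (- Num.ceil ((t - 1) / 2)); rewrite /red2 intrN; lra. Qed.
End S.

Section S.
Variable R : realType.

Lemma lc_alg1 (u v : R) : light_cond u v -> light_cond (- u) (v - u).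
Proof.
rewrite /light_cond => -[h1 h2].
have [hu|hu] : 0 < u \/ u < 0.
  case: (ltrgtP u 0) => h; [by right| by left| by move: h1; rewrite h mul0r ltxx].
- have hv : 0 < v by rewrite pmulr_rgt0 in h1.
  move: h2; rewrite (gtr0_norm hu) (gtr0_norm hv).
  move=> h2; have h3 : v - u < 0 by lra.
    rewrite (ltr0_norm h3) normrN (gtr0_norm hu); split; [nra|lra].
- have hv : v < 0 by rewrite nmulr_rgt0 in h1.
  move: h2; rewrite (ltr0_norm hu) (ltr0_norm hv).
  move=> h2; have h3 : 0 < v - u by lra.
  rewrite (gtr0_norm h3) normrN (ltr0_norm hu); split; [nra|lra].
Qed.

Lemma lc_alg2 (u v : R) : light_cond u v -> light_cond u (u - v).
Proof.
rewrite /light_cond => -[h1 h2].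
have [hu|hu] : 0 < u \/ u < 0.
  case: (ltrgtP u 0) => h; [by right| by left| by move: h1; rewrite h mul0r ltxx].
- have hv : 0 < v by rewrite pmulr_rgt0 in h1.
  move: h2; rewrite (gtr0_norm hu) (gtr0_norm hv).
  move=> h2; have h3 : 0 < u - v by lra.
  rewrite (gtr0_norm h3); split; [nra|lra].
- have hv : v < 0 by rewrite nmulr_rgt0 in h1.
  move: h2; rewrite (ltr0_norm hu) (ltr0_norm hv).
  move=> h2; have h3 : u - v < 0 by lra.
  rewrite (ltr0_norm h3); split; [nra|lra].
Qed.

Lemma lc_bound (u v : R) : light_cond u v -> -1 < u -> u <= 1 -> `|v| < 1.
Proof.
move=> [_ h2] h3 h4; apply: lt_le_trans h2 _.
by rewrite ler_norml; apply/andP; split; lra.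
Qed.

Lemma lemA (U V : R) : red2 U != 1 -> light_cond (red2 U) (red2 V) ->
  light_cond (red2 (- U)) (red2 (V - U)).
Proof.
move=> hne hl.
have [ku hu] := red2_shift _ U; have [kv hv] := red2_shift _ V.
have [r1 r2] := red2_range _ U; have [r3 r4] := red2_range _ V.
have hlt : red2 U < 1 by rewrite lt_neqAle hne.
have hl2 := lc_alg1 hl.
have hb := lc_bound hl2.
rewrite (@red2_char _ (- U) (- red2 U) (- ku)); first last.
- by rewrite hu intrN; lra.
- lra.
- lra.
rewrite (@red2_char _ (V - U) (red2 V - red2 U) (kv - ku)) //.
- have : `|red2 V - red2 U| < 1 by apply: hb; lra.
  by rewrite ltr_norml => /andP[]; lra.
- have : `|red2 V - red2 U| < 1 by apply: hb; lra.
  by rewrite ltr_norml => /andP[]; lra.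
- by rewrite hu hv intrB; lra.
Qed.

Lemma lemB (U V W : R) (j : int) : W = U - V + 2 * j%:~R ->
  light_cond (red2 U) (red2 V) -> light_cond (red2 U) (red2 W).
Proof.
move=> hW hl.
have [ku hu] := red2_shift _ U; have [kv hv] := red2_shift _ V.
have [r1 r2] := red2_range _ U.
have hl2 := lc_alg2 hl.
have hb := lc_bound hl2 r1 r2.
move: hb; rewrite ltr_norml => /andP[b1 b2].
rewrite (@red2_char _ W (red2 U - red2 V) (ku - kv - j)) //.
- lra.
- by rewrite hu hv hW !intrB; lra.
Qed.
End S.

Lemma odd_omega p q : even_rational_param p q -> odd (p + q).
Proof.
case=> hp hpq hc ho; rewrite oddD; move: ho; rewrite oddM.
case hop: (odd p); case hoq: (odd q) => //= _.
have h2p : (2 %| p)%N by rewrite dvdn2 hop.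
have h2q : (2 %| q)%N by rewrite dvdn2 hoq.
have : (2 %| gcdn p q)%N by rewrite dvdn_gcd h2p h2q.
by move: hc; rewrite /coprime => /eqP ->.
Qed.

Section S.
Variable R : realType.

Lemma omega_neq0 p q : even_rational_param p q -> omega R p q != 0.
Proof. by case=> hp _ _ _; rewrite /omega pnatr_eq0 addn_eq0 negb_and -lt0n hp. Qed.

Lemma PQ2 p q : even_rational_param p q -> bigP R p q + bigQ R p q = 2 :> R.
Proof.
move=> h; have hw := omega_neq0 h.
rewrite /bigP /bigQ -mulrDl -natrD -mulnDr natrM.
rewrite /omega in hw *; by rewrite -mulrA divff // mulr1.
Qed.

Lemma FH_neq1 p q (n : int) : even_rational_param p q ->
  red2 (2 * bigP R p q * n%:~R) != 1 :> R.
Proof.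
move=> h; have hw := omega_neq0 h.
have ho := odd_omega h.
have hj : (p + q = ((p + q)./2).*2 + 1)%N by rewrite -{1}(odd_double_half (p + q)) ho addnC.
apply/eqP => e.
have [k hk] := @red2_shift R (2 * bigP R p q * (n%:~R : R)).
rewrite e /bigP in hk.
have : ((p + q)%:R : R) * (1 - 2 * k%:~R) = 4 * p%:R * n%:~R.
  rewrite /omega in hw; apply: (mulfI (invr_neq0 hw)).
  rewrite mulrA mulVf // mul1r.
  have -> : 1 - 2 * (k%:~R : R) = 2 * (2 * p)%:R / (p + q)%:R * n%:~R by lra.
  rewrite natrM; field; by rewrite -natrD.
move=> E.
have E2 : ((p + q)%:Z * (1 - 2 * k))%:~R = (4 * p%:Z * n)%:~R :> R.
  rewrite !intrM intrB /=.
rewrite intrM -E; reflexivity.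
move/eqP: E2; rewrite eqr_int => /eqP; rewrite hj.
lia.
Qed.
End S.

Section S.
Variable R : realType.
Variables (p q : nat).
Hypothesis h : even_rational_param p q.
Let P := bigP R p q.

Lemma H_gen (s c : R) (z : R * R) : on_horiz z -> on_slope_line s z ->
  light_cond (F_H p q z) (red2 (P * z.2 + c * z.1 + 1)) ->
  [/\ on_horiz (rho z), on_slope_line s (rho z) &
  light_cond (F_H p q (rho z)) (red2 (P * (rho z).2 + c * (rho z).1 + 1))].
Proof.
case: z => x y [n /= hn] [m /= hm] hl; split.
- by exists (- n); rewrite /= hn intrN.
- exists (m - 2 * n); rewrite /= intrB intrM /=; rewrite hn in hm *; lra.
rewrite /F_H /=.
have -> : 2 * bigP R p q * - y = - (2 * bigP R p q * y) by ring.
have -> : P * - y + c * x + 1 = (P * y + c * x + 1) - 2 * bigP R p q * y by rewrite /P; ring.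
apply: lemA => //.
by rewrite hn; apply: FH_neq1.
Qed.

Lemma V_gen (s s' c c' : R) (z : R * R) : on_vert z -> on_slope_line s z ->
  s + s' = 2 -> P * c' = 2 * P - P * c ->
  light_cond (F_V p q z) (red2 (P * z.2 + P * c * z.1 + 1)) ->
  [/\ on_vert (rho z), on_slope_line s' (rho z) &
  light_cond (F_V p q (rho z)) (red2 (P * (rho z).2 + P * c' * (rho z).1 + 1))].
Proof.
case: z => x y [n /= hn] [m /= hm] hs hc hl; split.
- by exists n.
- exists (2 * n - m); rewrite /= intrB intrM /=; rewrite hn in hm *.
  have -> : s' = 2 - s by lra.
  lra.
rewrite /F_V /=.
apply: (@lemB R _ (P * y + P * c * x + 1) _ 1) => //.
rewrite /P in hc *; rewrite mulrA hc /=.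
rewrite /bigP; have -> : (1%:~R : R) = 1 by []; ring.
Qed.
End S.
Unset Implicit Arguments.

Lemma rhoK (R : realType) (z : R * R) : rho (rho z) = z.
Proof. by case: z => x y; rewrite /rho /= opprK. Qed.

Theorem lemma2p3 (R : realType) (p q : nat) :
  even_rational_param p q ->
  forall z : R * R,
    (light_H_P p q z <-> light_H_P p q (rho z)) /\
    (light_H_Q p q z <-> light_H_Q p q (rho z)) /\
    (light_V_P p q z <-> light_V_Q p q (rho z)).
Proof.
move=> h.
have hPQ := PQ2 R h.
have fP : forall z : R * R, light_H_P p q z -> light_H_P p q (rho z).
  move=> z [ho hs hl]; exact: (@H_gen R p q h _ (bigP R p q ^+ 2) z ho hs hl).
have fQ : forall z : R * R, light_H_Q p q z -> light_H_Q p q (rho z).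
  move=> z [ho hs hl]; exact: (@H_gen R p q h _ (bigP R p q * bigQ R p q) z ho hs hl).
have fV1 : forall z : R * R, light_V_P p q z -> light_V_Q p q (rho z).
  move=> z [ho hs hl].
  have hc : bigP R p q * bigQ R p q = 2 * bigP R p q - bigP R p q * bigP R p q.
    have -> : bigQ R p q = 2 - bigP R p q by lra.
    ring.
  move: hl; rewrite /F_P expr2 => hl.
  exact: (@V_gen R p q _ _ (bigP R p q) (bigQ R p q) z ho hs hPQ hc hl).
have fV2 : forall z : R * R, light_V_Q p q z -> light_V_P p q (rho z).
  move=> z [ho hs hl].
  have hc : bigP R p q * bigP R p q = 2 * bigP R p q - bigP R p q * bigQ R p q.
    have -> : bigQ R p q = 2 - bigP R p q by lra.
    ring.
  have hs2 : bigQ R p q + bigP R p q = 2 by lra.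
  rewrite /light_V_P /F_P expr2.
  exact: (@V_gen R p q _ _ (bigQ R p q) (bigP R p q) z ho hs hs2 hc hl).
move=> z; split; [|split]; split.
- exact: fP.
- by move/fP; rewrite rhoK.
- exact: fQ.
- by move/fQ; rewrite rhoK.
- exact: fV1.
- by move/fV2; rewrite rhoK.
Qed.
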